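(* Let $\mathbf{A}$ be a Bochvar algebra whose $\{\wedge,\vee,\neg,0,1\}$-reduct is the Płonka sum of Boolean algebras $\mathbf{A}_i$ ($i\in I$) over the semilattice $\langle I,\vee,i_0\rangle$. Let $K=\{J_2^{\mathbf{A}}(1^{A_i}):i\in I\}$, where $1^{A_i}$ is the top element of $\mathbf{A}_i$. Then $\langle\mathbf{A}_{i_0},K\rangle$ is a Bochvar system. That is: - $\mathbf{A}_{i_0}$ is a Boolean algebra; - $K\subseteq A_{i_0}$; - $1\in K$; - $K$ is closed under the meet of $\mathbf{A}_{i_0}$.
   Context: $\mathbf{WK}^e$ is the three-element algebra on $\{0,\tfrac12,1\}$ of type $\langle\wedge,\vee,\neg,J_2,0,1\rangle$. Its operations are: - $\neg$ swaps $0,1$ and fixes $\tfrac12$; - $\wedge,\vee$ are Boolean on $\{0,1\}$ and return $\tfrac12$ whenever some argument is $\tfrac12$; - $J_2(1)=1$ and $J_2(\tfrac12)=J_2(0)=0$. Bochvar algebras are the members of $ISP(\mathbf{WK}^e)$. The $\{\wedge,\vee,\neg,0,1\}$-reduct of any Bochvar algebra is an involutive bisemilattice. Hence it is (canonically, up to isomorphism) the Płonka sum of a semilattice direct system of Boolean algebras over a join-semilattice $I$ with least element $i_0$. The Płonka sum has universe the disjoint union of the fibres $A_i$. Operations are computed by mapping the arguments via the system homomorphisms $p_{ij}$ into the fibre indexed by the join of their indices; constants come from $\mathbf{A}_{i_0}$. A Bochvar system is a pair $\langle\mathbf{B},\mathbf{I}\rangle$ with $\mathbf{B}$ a Boolean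 algebra and $I\subseteq B$ containing $1$ and closed under $\wedge$. *)

(* Defs.v *)
From HB Require Import structures.
From mathcomp Require Import all_boot all_order.

Set Implicit Arguments.
Unset Strict Implicit.
Unset Printing Implicit Defensive.

Import Order.Theory.
Local Open Scope order_scope.

Inductive wk3 : Type := W0 | Wh | W1.

Definition wk_neg (x : wk3) : wk3 :=
  match x with W0 => W1 | Wh => Wh | W1 => W0 end.

Definition wk_meet (x y : wk3) : wk3 :=
  match x, y with
  | Wh, _ | _, Wh => Wh
  | W1, W1 => W1
  | _, _ => W0
  end.

Definition wk_join (x y : wk3) : wk3 :=
  match x, y with
  | Wh, _ | _, Wh => Wh
  | W0, W0 => W0
  | _, _ => W1
  end.

Definition wk_J2 (x : wk3) : wk3 :=
  match x with W1 => W1 | _ => W0 end.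

(** An algebra (A, meet, join, neg, J2, 0, 1) is a Bochvar algebra iff it is in
    ISP(WK^e), i.e. it embeds (injective homomorphism) into a direct power
    X -> wk3 of WK^e. *)
Definition is_bochvar (A : Type) (meet join : A -> A -> A) (neg J2 : A -> A)
    (zero one : A) : Prop :=
  exists (X : Type) (h : A -> X -> wk3),
    injective h /\
    (forall a b x, h (meet a b) x = wk_meet (h a x) (h b x)) /\
    (forall a b x, h (join a b) x = wk_join (h a x) (h b x)) /\
    (forall a x, h (neg a) x = wk_neg (h a x)) /\
    (forall a x, h (J2 a) x = wk_J2 (h a x)) /\
    (forall x, h zero x = W0) /\
    (forall x, h one x = W1).

(** Semilattice direct system of Boolean algebras B i (i in the join
    semilattice I with least element \bot = i0), with homomorphisms
    p i j : B i -> B j for i <= j. *)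
Definition semilattice_direct_system (dI : Order.disp_t)
    (I : bJoinSemilatticeType dI) (dB : Order.disp_t)
    (B : I -> ctbDistrLatticeType dB) (p : forall i j : I, B i -> B j) : Prop :=
  (forall i (x : B i), p i i x = x) /\
  (forall (i j k : I) (x : B i), i <= j -> j <= k -> p j k (p i j x) = p i k x) /\
  (forall i j : I, i <= j ->
     (forall x y : B i, p i j (x `&` y) = p i j x `&` p i j y) /\
     (forall x y : B i, p i j (x `|` y) = p i j x `|` p i j y) /\
     (forall x : B i, p i j (~` x) = ~` p i j x) /\
     p i j \bot = \bot /\ p i j \top = \top).

Definition psum (dI : Order.disp_t) (I : bJoinSemilatticeType dI)
    (dB : Order.disp_t) (B : I -> ctbDistrLatticeType dB) : Type :=
  {i : I & B i}.

Definition ps_meet dI (I : bJoinSemilatticeType dI) dB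
    (B : I -> ctbDistrLatticeType dB) (p : forall i j : I, B i -> B j)
    (a b : psum B) : psum B :=
  let k := projT1 a `|` projT1 b in
  existT (fun i => B i) k (p _ k (projT2 a) `&` p _ k (projT2 b)).

Definition ps_join dI (I : bJoinSemilatticeType dI) dB
    (B : I -> ctbDistrLatticeType dB) (p : forall i j : I, B i -> B j)
    (a b : psum B) : psum B :=
  let k := projT1 a `|` projT1 b in
  existT (fun i => B i) k (p _ k (projT2 a) `|` p _ k (projT2 b)).

Definition ps_neg dI (I : bJoinSemilatticeType dI) dB
    (B : I -> ctbDistrLatticeType dB) (a : psum B) : psum B :=
  existT (fun i => B i) (projT1 a) (~` projT2 a).

Definition ps_zero dI (I : bJoinSemilatticeType dI) dB
    (B : I -> ctbDistrLatticeType dB) : psum B :=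
  existT (fun i => B i) \bot \bot.

Definition ps_one dI (I : bJoinSemilatticeType dI) dB
    (B : I -> ctbDistrLatticeType dB) : psum B :=
  existT (fun i => B i) \bot \top.

(* Main.v *)
Require Import Defs.
From HB Require Import structures.
From mathcomp Require Import all_boot all_order.
From Stdlib Require Import FunctionalExtensionality.
Import Order.Theory.
Local Open Scope order_scope.

Theorem theorem3p4 (dI : Order.disp_t) (I : bJoinSemilatticeType dI)
    (dB : Order.disp_t) (B : I -> ctbDistrLatticeType dB)
    (p : forall i j : I, B i -> B j) (J2 : psum B -> psum B) :
  semilattice_direct_system p ->
  is_bochvar (ps_meet p) (ps_join p) (@ps_neg _ _ _ B) J2
    (ps_zero B) (ps_one B) ->
  let K : B \bot -> Prop := fun b =>
    exists i : I, J2 (existT (fun k => B k) i \top) = existT (fun k => B k) \bot b in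
  (forall i : I, projT1 (J2 (existT (fun k => B k) i \top)) = \bot) /\
  K \top /\
  (forall x y : B \bot, K x -> K y -> K (x `&` y)).
Proof.
move=> [pid [pcomp phom]] [X [h [hinj [hmeet [hjoin [hneg [hJ [h0 h1]]]]]]]] K.
have fib : forall c : psum B, (forall x, h c x <> Wh) -> projT1 c = \bot.
  move=> [k b] Hc.
  have E : ps_meet p (existT (fun k => B k) k b) (ps_zero B) = ps_zero B.
    apply: hinj; apply: functional_extensionality => x.
    rewrite hmeet h0; move: (Hc x); case: (h _ x) => //.
  have := f_equal (@projT1 _ _) E; rewrite /= joinx0 => ->; done.
have fibJ : forall c, projT1 (J2 c) = \bot.
  move=> c; apply: fib => x; rewrite hJ; by case: (h c x).
split; first by move=> i; apply: fibJ.
split.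
  exists \bot; apply: hinj; apply: functional_extensionality => x.
  rewrite hJ; change (existT (fun k => B k) \bot \top) with (ps_one B).
  by rewrite h1.
move=> x y [i Hi] [j Hj].
exists (i `|` j).
have Etop : existT (fun k => B k) (i `|` j) \top =
   ps_meet p (existT (fun k => B k) i \top) (existT (fun k => B k) j \top).
  rewrite /ps_meet /=.
  have [_ [_ [_ [_ ->]]]] := phom i (i `|` j) (leUl i j).
  have [_ [_ [_ [_ ->]]]] := phom j (i `|` j) (leUr j i).
  by rewrite meetxx.
have Em : ps_meet p (existT (fun k => B k) \bot x) (existT (fun k => B k) \bot y)
          = existT (fun k => B k) \bot (x `&` y).
  rewrite /ps_meet /=.
  move: (joinxx (\bot : I)); move: (\bot `|` \bot : I) => k ek.
  subst k; by rewrite !pid.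
apply: hinj; apply: functional_extensionality => z.
rewrite -Em hmeet -Hi -Hj !hJ Etop hmeet.
by case: (h _ z); case: (h _ z).
Qed.
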